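(* Let $n>1$, $a\in\mathcal{T}_n$, and consider the semigroup $(\mathcal{T}_n,*_a)$. Let $x\in\mathcal{T}_n$. If $\operatorname{rank}(x)\le\operatorname{rank}(a)$ and $|\operatorname{ran}(x)\cap M|\le1$ for every block $M$ of $\rho_a$, then $$R_x=\{y\in\mathcal{T}_n : \rho_y=\rho_x \text{ and } |\operatorname{ran}(y)\cap M|\le1 \text{ for every block } M \text{ of } \rho_a\}$$ and $|R_x|>1$. Otherwise $R_x=\{x\}$.
   Context: $\mathcal{T}_n$ is the set of all maps $N\to N$, $N=\{1,\dots,n\}$. Maps are composed from left to right: $(xy)(i)=y(x(i))$. For fixed $a\in\mathcal{T}_n$, $x*_a y:=xay$; $(\mathcal{T}_n,*_a)$ is a semigroup. $\operatorname{ran}(x)$ is the image of $x$, $\operatorname{rank}(x)=|\operatorname{ran}(x)|$, and $\rho_x$ is the partition of $N$ into the nonempty fibres of $x$ ($i,j$ in the same block iff $x(i)=x(j)$). Green's relations in a semigroup $S$: with $S^1$ the semigroup $S$ with an identity adjoined, $x\mathcal{L}y$ iff $S^1x=S^1y$, $x\mathcal{R}y$ iff $xS^1=yS^1$, $\mathcal{H}=\mathcal{L}\cap\mathcal{R}$, $\mathcal{D}=\mathcal{L}\circ\mathcal{R}$ (which equals $\mathcal{R}\circ\mathcal{L}$); $L_x,R_x,H_x,D_x$ denote the classes of $x$ in $(\mathcal{T}_n,*_a)$. *)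

(* Defs.v *)
From mathcomp Require Import all_boot.
Set Implicit Arguments. Unset Strict Implicit. Unset Printing Implicit Defensive.

(* T_n : all maps N -> N, N = {0,..,n-1} (a relabelling of {1,..,n}). *)
Definition Tn (n : nat) := {ffun 'I_n -> 'I_n}.

(* Left-to-right composition: (x y)(i) = y (x i). *)
Definition tcomp n (x y : Tn n) : Tn n := [ffun i => y (x i)].

Definition sand n (a x y : Tn n) : Tn n := tcomp (tcomp x a) y.

Definition rideal n (a x : Tn n) : {set Tn n} :=
  x |: [set sand a x u | u in [set: Tn n]].

Definition Rclass n (a x : Tn n) : {set Tn n} :=
  [set y | rideal a y == rideal a x].

Definition ran n (x : Tn n) : {set 'I_n} := [set x i | i in 'I_n].
Definition rank n (x : Tn n) : nat := #|ran x|.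

Definition rho n (x : Tn n) : {set {set 'I_n}} :=
  [set [set j | x j == x i] | i in 'I_n].

(* Main.v *)
Require Import Defs.
From mathcomp Require Import all_boot.
Set Implicit Arguments. Unset Strict Implicit. Unset Printing Implicit Defensive.

Section S.
Variables (n : nat) (a : Tn n).

Definition Cp (x : Tn n) := forall i j, a (x i) = a (x j) -> x i = x j.

Lemma rideal_mem (x z : Tn n) :
  z \in rideal a x <-> z = x \/ (forall i j, a (x i) = a (x j) -> z i = z j).
Proof.
rewrite /rideal in_setU1; split.
  case/orP => [/eqP->|/imsetP [u _ ->]]; [by left|right].
  by move=> i j e; rewrite /sand /tcomp !ffunE /= ?ffunE e.
case => [->|H]; first by rewrite eqxx.
apply/orP; right; apply/imsetP.
exists [ffun k => if [pick i | a (x i) == k] is Some i then z i else z k].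
  by rewrite in_setT.
apply/ffunP => i; rewrite /sand /tcomp !ffunE /= ?ffunE.
case: pickP => [i' /eqP e|]; first by rewrite (H i' i e).
by move=> /(_ i); rewrite eqxx.
Qed.

Lemma rideal_self x : x \in rideal a x.
Proof. by apply/rideal_mem; left. Qed.

Lemma Rclass_mem x y : y \in Rclass a x -> y = x \/
  ((forall i j, a (x i) = a (x j) -> y i = y j) /\
   (forall i j, a (y i) = a (y j) -> x i = x j)).
Proof.
rewrite inE => /eqP E.
have := rideal_self y; rewrite E => /rideal_mem [->|H1]; first by left.
have := rideal_self x; rewrite -E => /rideal_mem [->|H2]; first by left.
by right.
Qed.

Lemma ridealC x z : Cp x ->
  (z \in rideal a x <-> forall i j, x i = x j -> z i = z j).
Proof.
move=> C; split.
  case/rideal_mem=> [->|H] i j e //; apply: H; by rewrite e.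
move=> H; apply/rideal_mem; right=> i j e; apply: H; exact: C.
Qed.

Lemma RclassC x : Cp x -> Rclass a x =
  [set y : Tn n | [forall i, forall j, (a (y i) == a (y j)) ==> (y i == y j)] &&
           [forall i, forall j, (x i == x j) == (y i == y j)]].
Proof.
move=> Cx; apply/setP => y; rewrite [RHS]inE; apply/idP/idP.
  case/Rclass_mem => [->|[H1 H2]].
    apply/andP; split; apply/forallP=> i; apply/forallP=> j; rewrite ?eqxx //.
    by apply/implyP=> /eqP /Cx ->.
  apply/andP; split; apply/forallP=> i; apply/forallP=> j.
    by apply/implyP=> /eqP /H2 /(congr1 a) /H1 ->.
  apply/eqP; apply/idP/idP => /eqP e; apply/eqP.
    by apply: H1; rewrite e.
  by apply: H2; rewrite e.
case/andP => /forallP Cy /forallP K.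
have Cy' : Cp y by move=> i j /eqP e; have /forallP/(_ j)/implyP := Cy i; move/(_ e)/eqP.
have K' i j : (x i = x j) <-> (y i = y j).
  have /forallP/(_ j)/eqP e := K i.
  by split => /eqP; [rewrite e | rewrite -e] => /eqP.
rewrite inE; apply/eqP/setP => z.
apply/idP/idP.
  move/(ridealC z Cy') => H; apply/(ridealC z Cx) => i j /K'; exact: H.
move/(ridealC z Cx) => H; apply/(ridealC z Cy') => i j /K'; exact: H.
Qed.

Lemma RclassNC x : ~ Cp x -> Rclass a x = [set x].
Proof.
move=> NC; apply/setP => y; rewrite in_set1; apply/idP/idP.
  case/Rclass_mem => [->|[H1 H2]]; first by rewrite eqxx.
  exfalso; apply: NC => i j e; apply: H2; by rewrite (H1 i j e).
by move/eqP->; rewrite inE eqxx.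
Qed.

End S.

Section S.
Variables (n : nat) (a : Tn n).

Lemma Cp_card x : Cp a x <-> forall M, M \in rho a -> #|ran x :&: M| <= 1.
Proof.
split.
  move=> C M /imsetP [k _ ->]; apply/card_le1_eqP => u v.
  rewrite !inE => /andP [/imsetP [i _ ->] /eqP e1] /andP [/imsetP [j _ ->] /eqP e2].
  by apply: C; rewrite e1 e2.
move=> H i j e.
have hM : [set k | a k == a (x i)] \in rho a by apply/imsetP; exists (x i).
have hi : x i \in ran x by apply/imsetP; exists i.
have hj : x j \in ran x by apply/imsetP; exists j.
have /card_le1_eqP := H _ hM.
by apply; rewrite !inE ?hi ?hj ?e eqxx.
Qed.

Lemma Cp_rank x : Cp a x -> rank x <= rank a.
Proof.
move=> C; rewrite /rank -(card_in_imset (f := a)).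
  apply: subset_leq_card; apply/subsetP => v /imsetP [u /imsetP [i _ ->] ->].
  by apply/imsetP; exists (x i).
move=> u v /imsetP [i _ ->] /imsetP [j _ ->]; exact: C.
Qed.

Lemma rho_eq (x y : Tn n) :
  (rho y == rho x) = [forall i, forall j, (x i == x j) == (y i == y j)].
Proof.
apply/eqP/forallP.
  move=> E i; apply/forallP => j.
  have : [set k | y k == y i] \in rho x by rewrite -E; apply/imsetP; exists i.
  case/imsetP => k _ Ek.
  have : i \in [set k | y k == y i] by rewrite inE.
  rewrite Ek inE => /eqP xik.
  have : j \in [set k | y k == y i] = (j \in [set l | x l == x k]) by rewrite Ek.
  rewrite !inE -xik => e; by rewrite (eq_sym (x i)) (eq_sym (y i)) e.
move=> K; rewrite /rho; apply: eq_imset => i; apply/setP => j; rewrite !inE.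
by have /forallP/(_ j)/eqP := K i; rewrite (eq_sym (x j)) (eq_sym (y j)) => ->.
Qed.

Lemma Cp_bool (y : Tn n) :
  [forall i, forall j, (a (y i) == a (y j)) ==> (y i == y j)] <-> Cp a y.
Proof.
split.
  move=> /forallP H i j /eqP e; have /forallP/(_ j)/implyP := H i; by move/(_ e)/eqP.
move=> C; apply/forallP=> i; apply/forallP=> j; apply/implyP => /eqP /C ->; exact: eqxx.
Qed.

End S.

Section S.
Variables (n : nat) (a : Tn n).

Lemma other_y (x : Tn n) : 1 < n -> Cp a x ->
  exists y : Tn n, [/\ y != x, Cp a y & forall i j, (x i == x j) = (y i == y j)].
Proof.
move=> hn C.
case: (boolP [exists m, m \notin ran x]) => [/existsP [m /negP mnot] | nex]; last first.
  have surj : forall m, m \in ran x.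
    by move=> m; apply/negPn; apply: contraNN nex => h; apply/existsP; exists m.
  have ainj : injective a.
    move=> u v; have /imsetP [i _ ->] := surj u; have /imsetP [j _ ->] := surj v.
    exact: C.
  exists [ffun i => rev_ord (x i)]; split.
  - pose z : 'I_n := Ordinal (ltnW hn).
    have /imsetP [i _ ei] := surj z.
    apply/eqP => /ffunP /(_ i); rewrite ffunE -ei => /(congr1 val) /=.
    by rewrite subnS /=; case: n hn {z i ei} => // [[]].
  - by move=> i j; apply: ainj.
  - by move=> i j; rewrite !ffunE (inj_eq (@rev_ord_inj n)).
set v := if [pick i | a (x i) == a m] is Some i then x i else x m.
have vran : v \in ran x.
  by rewrite /v; case: pickP => [i _|_]; apply/imsetP; [exists i | exists m].
have mv : forall i, x i != m by move=> i; apply/eqP => e; apply: mnot; rewrite -e; apply/imsetP; exists i.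
have hv : forall j, a (x j) = a m -> x j = v.
  move=> j e; rewrite /v; case: pickP => [k /eqP ek | /(_ j)]; last by rewrite e eqxx.
  by apply: C; rewrite ek e.
exists [ffun i => if x i == v then m else x i]; split.
- have /imsetP [k _ ek] := vran.
  apply/eqP => /ffunP /(_ k); rewrite ffunE -ek eqxx => e.
  by move: (mv k); rewrite e ek eqxx.
- move=> i j; rewrite !ffunE.
  case: eqP => ei; case: eqP => ej //= e.
  + by exfalso; apply: ej; apply: hv.
  + by exfalso; apply: ei; apply: hv.
  + exact: C.
- move=> i j; rewrite !ffunE.
  case: (x i =P v) => ei; case: (x j =P v) => ej.
  + by rewrite ei ej !eqxx.
  + rewrite (eq_sym m) (negbTE (mv j)); apply/eqP => e; apply: ej; by rewrite -e.
  + rewrite (negbTE (mv i)); apply/eqP => e; apply: ei; by rewrite e.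
  + by [].
Qed.

End S.

Theorem theorem6 (n : nat) (a x : Tn n) (hn : 1 < n) :
  ((rank x <= rank a /\ (forall M, M \in rho a -> #|ran x :&: M| <= 1)) ->
     Rclass a x = [set y : Tn n | (rho y == rho x) &&
                     [forall M in rho a, #|ran y :&: M| <= 1]]
     /\ 1 < #|Rclass a x|)
  /\
  (~ (rank x <= rank a /\ (forall M, M \in rho a -> #|ran x :&: M| <= 1)) ->
     Rclass a x = [set x]).
Proof.
split.
  move=> [_ /Cp_card Cx].
  have E : Rclass a x = [set y : Tn n | (rho y == rho x) &&
                     [forall M in rho a, #|ran y :&: M| <= 1]].
    rewrite (RclassC Cx); apply/setP => y; rewrite !inE rho_eq andbC; congr (_ && _).
    apply/idP/idP.
      by move/Cp_bool/Cp_card => H; apply/forall_inP.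
    by move/forall_inP/Cp_card/Cp_bool.
  split => //.
  have [y [yx Cy K]] := other_y hn Cx.
  have xin : x \in Rclass a x by rewrite inE.
  have yin : y \in Rclass a x.
    rewrite (RclassC Cx) inE; apply/andP; split; first exact/Cp_bool.
    by apply/forallP => i; apply/forallP => j; rewrite K.
  apply: (leq_trans _ (subset_leq_card (_ : [set x; y] \subset Rclass a x))).
    by rewrite cards2 eq_sym yx.
  by apply/subsetP => z; rewrite in_set2 => /orP [] /eqP ->.
move=> NC; apply: RclassNC => Cx; apply: NC; split; first exact: Cp_rank.
exact/Cp_card.
Qed.
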